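(* For every $n\in\mathbb{N}$ there exists a strongly $n$-connected $2n$-regular oriented graph on $16n+1$ vertices with no Hamilton cycle.
   Context: An oriented graph has at most one edge between any two vertices; $d$-regular means every vertex has in- and outdegree exactly $d$. Strongly $n$-connected means that the digraph has more than $n$ vertices and remains strongly connected after deleting any set of fewer than $n$ vertices. A Hamilton cycle is a directed cycle through all vertices. *)

(* Defs.v *)
From mathcomp Require Import all_boot.
Set Implicit Arguments. Unset Strict Implicit. Unset Printing Implicit Defensive.

Definition oriented (T : finType) (e : rel T) : Prop :=
  (forall x, ~~ e x x) /\ (forall x y, e x y -> ~~ e y x).

Definition outdeg (T : finType) (e : rel T) (x : T) : nat := #|[set y | e x y]|.
Definition indeg (T : finType) (e : rel T) (x : T) : nat := #|[set y | e y x]|.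

Definition regular (T : finType) (e : rel T) (d : nat) : Prop :=
  forall x, outdeg e x = d /\ indeg e x = d.

Definition delete_rel (T : finType) (e : rel T) (S : {set T}) : rel T :=
  [rel x y | [&& e x y, x \notin S & y \notin S]].

Definition strongly_connected_minus (T : finType) (e : rel T) (S : {set T}) : Prop :=
  forall x y, x \notin S -> y \notin S -> connect (delete_rel e S) x y.

Definition strongly_k_connected (T : finType) (e : rel T) (n : nat) : Prop :=
  n < #|T| /\ forall S : {set T}, #|S| < n -> strongly_connected_minus e S.

Definition hamiltonian (T : finType) (e : rel T) : Prop :=
  exists c : seq T, [/\ uniq c, forall x, x \in c & cycle e c].

(* Main.v *)
Require Import Defs.
From mathcomp Require Import all_boot.
From mathcomp Require Import zify.
Set Implicit Arguments. Unset Strict Implicit. Unset Printing Implicit Defensive.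

Lemma card_sumset (A B : finType) (P : pred (A + B)) :
  #|[set y | P y]| = #|[set a | P (inl a)]| + #|[set b | P (inr b)]|.
Proof.
rewrite -!sum1_card (big_sumType _ (fun y => y \in [set y | P y])).
by congr (_ + _); apply: eq_bigl => i; rewrite !inE.
Qed.

Lemma card_unitset (P : pred unit) : #|[set y | P y]| = P tt.
Proof.
case E: (P tt).
  apply/eqP; rewrite eqn_leq; apply/andP; split.
    by rewrite -[X in _ <= X](card_unit); exact: max_card.
  by rewrite card_gt0; apply/set0Pn; exists tt; rewrite inE.
apply/eqP; rewrite cards_eq0; apply/eqP/setP => -[]; by rewrite !inE E.
Qed.

Lemma card_ordeq m c : #|[set x : 'I_m | val x == c]| = (c < m).
Proof.
case: (ltnP c m) => H.
  have -> : [set x : 'I_m | val x == c] = [set Ordinal H].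
    by apply/setP => x; rewrite !inE; apply/eqP/eqP => [E|->] //; apply: val_inj; rewrite /= E.
  by rewrite cards1.
apply/eqP; rewrite cards_eq0; apply/eqP/setP => x; rewrite !inE.
apply/negbTE; apply/eqP => E; move: (ltn_ord x); rewrite E; lia.
Qed.

Definition distM (M x y : nat) := if x <= y then y - x else y + M - x.

Lemma card_dist M x K : x < M -> K < M ->
  #|[set y : 'I_M | (0 < distM M x y) && (distM M x y <= K)]| = K.
Proof.
case: M => [//|M] xM KM.
pose v (j : 'I_K) := if x + j.+1 < M.+1 then x + j.+1 else x + j.+1 - M.+1.
pose f (j : 'I_K) : 'I_M.+1 := inord (v j).
have vlt j : v j < M.+1 by rewrite /v; case: ifP => Hc; have := ltn_ord j; lia.
have fv j : nat_of_ord (f j) = v j by rewrite /f inordK.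
have -> : [set y : 'I_M.+1 | (0 < distM M.+1 x y) && (distM M.+1 x y <= K)] = [set f j | j : 'I_K].
  apply/setP => y; rewrite inE; apply/idP/imsetP.
    rewrite /distM => H.
    have Hy := ltn_ord y.
    have jK : (if x <= y then y - x else y + M.+1 - x).-1 < K.
      by move: H; case: (x <= y) => H; lia.
    exists (Ordinal jK) => //; apply: val_inj => /=; rewrite fv /v /=.
    by move: H; case: (leqP x y) => Hxy /= H; case: ifP => H2; lia.
  case=> j _ ->; rewrite /distM fv /v; have := ltn_ord j.
  by case: (ltnP (x + j.+1) M.+1) => H1 /=; case: ifP => H2; lia.
rewrite card_imset ?card_ord // => j1 j2 /(congr1 val) /=; rewrite !fv /v => E.
apply: val_inj => /=; move: E (ltn_ord j1) (ltn_ord j2).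
by case: ifP => H1; case: ifP => H2; lia.
Qed.

Lemma card_dist_in M x K : x < M -> K < M ->
  #|[set y : 'I_M | (0 < distM M y x) && (distM M y x <= K)]| = K.
Proof.
case: M => [//|M] xM KM.
pose v (j : 'I_K) := if j.+1 <= x then x - j.+1 else x + M.+1 - j.+1.
pose f (j : 'I_K) : 'I_M.+1 := inord (v j).
have vlt j : v j < M.+1 by rewrite /v; case: ifP => Hc; have := ltn_ord j; lia.
have fv j : nat_of_ord (f j) = v j by rewrite /f inordK.
have -> : [set y : 'I_M.+1 | (0 < distM M.+1 y x) && (distM M.+1 y x <= K)] = [set f j | j : 'I_K].
  apply/setP => y; rewrite inE; apply/idP/imsetP.
    rewrite /distM => H.
    have Hy := ltn_ord y.
    have jK : (if y <= x then x - y else x + M.+1 - y).-1 < K.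
      by move: H; case: (y <= x) => H; lia.
    exists (Ordinal jK) => //; apply: val_inj => /=; rewrite fv /v /=.
    by move: H; case: (leqP y x) => Hxy /= H; case: ifP => H2; lia.
  case=> j _ ->; rewrite /distM fv /v; have := ltn_ord j.
  by case: (leqP j.+1 x) => H1 /=; case: ifP => H2; lia.
rewrite card_imset ?card_ord // => j1 j2 /(congr1 val) /=; rewrite !fv /v => E.
apply: val_inj => /=; move: E (ltn_ord j1) (ltn_ord j2).
by case: ifP => H1; case: ifP => H2; lia.
Qed.

Lemma card_false (T : finType) : #|[set a : T | false]| = 0.
Proof. by apply/eqP; rewrite cards_eq0; apply/eqP/setP => x; rewrite !inE. Qed.
Lemma card_true (T : finType) : #|[set a : T | true]| = #|T|.
Proof. by rewrite -cardsT; congr #|_|; apply/setP => x; rewrite !inE. Qed.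

Lemma card_subD (T : finType) (P Q : pred T) : (forall x, Q x -> P x) ->
  #|[set x | P x && ~~ Q x]| = #|[set x | P x]| - #|[set x | Q x]|.
Proof.
move=> QP.
have -> : [set x | P x && ~~ Q x] = [set x | P x] :\: [set x | Q x].
  by apply/setP => x; rewrite !inE andbC.
rewrite cardsD (setIidPr _) //; apply/subsetP => x; rewrite !inE; exact: QP.
Qed.

Lemma card_dist_eq M x K : x < M -> 0 < K < M ->
  #|[set y : 'I_M | distM M x y == K]| = 1.
Proof.
move=> xM /andP[K0 KM].
have E : [set y : 'I_M | (0 < distM M x y) && (distM M x y <= K)] =
         [set y : 'I_M | (0 < distM M x y) && (distM M x y <= K.-1)] :|: [set y : 'I_M | distM M x y == K].
  by apply/setP => y; rewrite !inE; case: (distM M x y) => [|d]; lia.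
have := card_dist xM KM; rewrite E cardsU card_dist //; last by lia.
have -> : [set y : 'I_M | (0 < distM M x y) && (distM M x y <= K.-1)] :&: [set y : 'I_M | distM M x y == K] = set0.
  by apply/setP => y; rewrite !inE; lia.
rewrite cards0; lia.
Qed.

Section Constr.
Variable n : nat.
Hypothesis n_gt0 : 0 < n.
Definition na := 2 * n.
Definition nb := (2 * n).-1.
Definition nm := (4 * n).+1.
Definition V := ('I_na + ('I_na + ('I_nb + ('I_nb + ('I_nm + ('I_nm + unit))))))%type.
Definition A1 (i : 'I_na) : V := inl i.
Definition A2 (i : 'I_na) : V := inr (inl i).
Definition B1 (i : 'I_nb) : V := inr (inr (inl i)).
Definition B2 (i : 'I_nb) : V := inr (inr (inr (inl i))).
Definition T1 (i : 'I_nm) : V := inr (inr (inr (inr (inl i)))).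
Definition T2 (i : 'I_nm) : V := inr (inr (inr (inr (inr (inl i))))).
Definition vv : V := inr (inr (inr (inr (inr (inr tt))))).

Definition dist (x y : nat) := distM nm x y.
Lemma nmE : nm = (4 * n).+1. Proof. by []. Qed.

Definition tT (x y : nat) :=
  [&& 0 < dist x y, dist x y <= 2 * n & ~~ ((x < n) && (dist x y == 2 * n))].

Definition eV (x y : V) : bool :=
  match x, y with
  | inl _, inr (inr (inl _)) => true
  | inl _, inr (inr (inr (inr (inr (inr _))))) => true
  | inr (inr (inl _)), inr (inl _) => true
  | inr (inl _), inr (inr (inr (inl _))) => true
  | inr (inl i), inr (inr (inr (inr (inl x)))) => (i < n) && (x == 2 * n + i :> nat)
  | inr (inl i), inr (inr (inr (inr (inr (inl x))))) => (n <= i) && (x == n + i :> nat)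
  | inr (inr (inr (inl _))), inl _ => true
  | inr (inr (inr (inr (inl x)))), inl i => (x < n) && (i == x :> nat)
  | inr (inr (inr (inr (inr (inl x))))), inl i => (x < n) && (i == n + x :> nat)
  | inr (inr (inr (inr (inl x)))), inr (inr (inr (inr (inl y)))) => tT x y
  | inr (inr (inr (inr (inr (inl x))))), inr (inr (inr (inr (inr (inl y))))) => tT x y
  | inr (inr (inr (inr (inr (inr _))))), inr (inl _) => true
  | _, _ => false
  end.

Lemma eV_irr x : ~~ eV x x.
Proof.
case: x => [i|[i|[i|[i|[i|[i|[]]]]]]] //=; rewrite /tT /dist /distM leqnn subnn //.
Qed.

Lemma eV_asym x y : eV x y -> ~~ eV y x.
Proof.
case: x => [i|[i|[i|[i|[i|[i|[]]]]]]]; case: y => [j|[j|[j|[j|[j|[j|[]]]]]]] //=;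
 rewrite /tT /dist /distM /nm; try (case: (i <= j); case: (j <= i)); try lia.
Qed.

Lemma card_V (P : pred V) : #|[set y | P y]| =
  #|[set i | P (A1 i)]| + (#|[set i | P (A2 i)]| + (#|[set i | P (B1 i)]| +
  (#|[set i | P (B2 i)]| + (#|[set i | P (T1 i)]| + (#|[set i | P (T2 i)]| + P vv))))).
Proof. by rewrite !card_sumset card_unitset. Qed.

Lemma card_tT_out (x : 'I_nm) : #|[set y : 'I_nm | tT x y]| = 2 * n - (x < n).
Proof.
have -> : [set y : 'I_nm | tT x y] = [set y : 'I_nm | ((0 < dist x y) && (dist x y <= 2 * n)) && ~~ ((x < n) && (dist x y == 2 * n))].
  by apply/setP => y; rewrite !inE /tT andbA.
rewrite card_subD; last by move=> y /andP[_ /eqP ->]; rewrite leqnn; lia.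
rewrite card_dist; last by rewrite /nm; lia. 2: by apply: ltn_ord.
case: (ltnP x n) => xn.
  have -> : [set y : 'I_nm | true && (dist x y == 2 * n)] = [set y : 'I_nm | distM nm x y == 2 * n].
    by apply/setP => y; rewrite !inE.
  rewrite card_dist_eq ?ltn_ord ?xn //; rewrite /nm; lia.
have -> : [set y : 'I_nm | false && (dist x y == 2 * n)] = [set y : 'I_nm | false] by apply/setP => y; rewrite !inE.
by rewrite card_false.
Qed.

Lemma card_tT_in (x : 'I_nm) : #|[set y : 'I_nm | tT y x]| = 2 * n - ((2 * n <= x) && (x < 3 * n)).
Proof.
have -> : [set y : 'I_nm | tT y x] = [set y : 'I_nm | ((0 < dist y x) && (dist y x <= 2 * n)) && ~~ ((y < n) && (dist y x == 2 * n))].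
  by apply/setP => y; rewrite !inE /tT andbA.
rewrite card_subD; last by move=> y /andP[_ /eqP ->]; rewrite leqnn; lia.
rewrite card_dist_in; last by rewrite /nm; lia. 2: by apply: ltn_ord.
have Hx := ltn_ord x.
case Hc: ((2 * n <= x) && (x < 3 * n)).
  have -> : [set y : 'I_nm | (y < n) && (dist y x == 2 * n)] = [set y : 'I_nm | nat_of_ord y == x - 2 * n].
    apply/setP => y; rewrite !inE /dist /distM; have Hy := ltn_ord y.
    move/andP: Hc => [Hc1 Hc2].
    by have Hnm := nmE; case: (leqP y x) => H1; apply/idP/idP; lia.
  rewrite card_ordeq; have Hnm := nmE; lia.
have -> : [set y : 'I_nm | (y < n) && (dist y x == 2 * n)] = [set y : 'I_nm | false].
  apply/setP => y; rewrite !inE /dist /distM; have Hy := ltn_ord y.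
  move/negbT: Hc; rewrite negb_and -!ltnNge => Hc.
  by have Hnm := nmE; case: (leqP y x) => H1; apply/negbTE; lia.
by rewrite card_false.
Qed.


Lemma card_one (m c : nat) (P : pred 'I_m) : c < m -> (forall x : 'I_m, P x = (nat_of_ord x == c)) ->
  #|[set x | P x]| = 1.
Proof.
move=> cm HP; have <- : #|[set x : 'I_m | nat_of_ord x == c]| = 1 by rewrite card_ordeq cm.
by apply: eq_card => x; rewrite !inE HP.
Qed.
Lemma card_zero (m : nat) (P : pred 'I_m) : (forall x : 'I_m, P x = false) -> #|[set x | P x]| = 0.
Proof. move=> HP; rewrite -(card_false 'I_m); by apply: eq_card => x; rewrite !inE HP. Qed.

Lemma eV_reg x : outdeg eV x = 2 * n /\ indeg eV x = 2 * n.
Proof.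
have Hnm := nmE. have Hna : na = 2 * n by []. have Hnb : nb = (2 * n).-1 by [].
rewrite /outdeg /indeg !card_V /A1 /A2 /B1 /B2 /T1 /T2 /vv.
case: x => [i|[i|[i|[i|[i|[i|[]]]]]]] /=; rewrite ?card_false ?card_true ?card_ord ?card_tT_out ?card_tT_in;
  try (have Hi := ltn_ord i).
- split; first lia.
  case: (ltnP i n) => Hin.
    rewrite (@card_one nm i); last (by move=> x; have Hx := ltn_ord x; apply/idP/idP; lia); last lia.
    rewrite (@card_zero nm); last (by move=> x; have Hx := ltn_ord x; apply/negbTE; lia); lia.
  rewrite (@card_zero nm); last (by move=> x; have Hx := ltn_ord x; apply/negbTE; lia).
  rewrite (@card_one nm (i - n)); last (by move=> x; have Hx := ltn_ord x; apply/idP/idP; lia); last lia.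
  lia.
- split; last lia.
  case: (ltnP i n) => Hin.
    rewrite (@card_one nm (2 * n + i)); last (by move=> x; have Hx := ltn_ord x; apply/idP/idP; lia); last lia.
    rewrite (@card_zero nm); last (by move=> x; have Hx := ltn_ord x; apply/negbTE; lia); lia.
  rewrite (@card_zero nm); last (by move=> x; have Hx := ltn_ord x; apply/negbTE; lia).
  rewrite (@card_one nm (n + i)); last (by move=> x; have Hx := ltn_ord x; apply/idP/idP; lia); last lia.
  lia.
- lia.
- lia.
- split.
    case: (ltnP i n) => Hin.
      rewrite (@card_one na i); last (by move=> x; have Hx := ltn_ord x; apply/idP/idP; lia); last lia.
      lia.
    rewrite (@card_zero na); last (by move=> x; have Hx := ltn_ord x; apply/negbTE; lia).
    lia.
  case: (boolP ((2 * n <= i) && (i < 3 * n))) => /= Hin.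
    rewrite (@card_one na (i - 2 * n)); last (by move=> x; have Hx := ltn_ord x; apply/idP/idP; lia); last lia.
    lia.
  rewrite (@card_zero na); last (by move=> x; have Hx := ltn_ord x; apply/negbTE; lia).
  lia.
- split.
    case: (ltnP i n) => Hin.
      rewrite (@card_one na (n + i)); last (by move=> x; have Hx := ltn_ord x; apply/idP/idP; lia); last lia.
      lia.
    rewrite (@card_zero na); last (by move=> x; have Hx := ltn_ord x; apply/negbTE; lia).
    lia.
  case: (boolP ((2 * n <= i) && (i < 3 * n))) => /= Hin.
    rewrite (@card_one na (i - n)); last (by move=> x; have Hx := ltn_ord x; apply/idP/idP; lia); last lia.
    lia.
  rewrite (@card_zero na); last (by move=> x; have Hx := ltn_ord x; apply/negbTE; lia).
  lia.
- lia.
Qed.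
End Constr.

Lemma next_closed (T : eqType) (c : seq T) (Q : pred T) : uniq c ->
  (forall x, Q x -> Q (next c x)) -> forall z, z \in c -> Q z -> forall w, w \in c -> Q w.
Proof.
move=> Uc HQ z zc Qz w wc.
case: (rot_to zc) => i q Hr.
have Uc' : uniq (z :: q) by rewrite -Hr rot_uniq.
have Nx x : next (z :: q) x = next c x by rewrite -Hr next_rot.
have key k : k < size (z :: q) -> Q (nth z (z :: q) k).
  elim: k => [//|k IH] Hk.
  have Hk' : k < size (z :: q) by lia.
  have := HQ _ (IH Hk'); rewrite -Nx next_nth mem_nth // index_uniq //.
have wc' : w \in z :: q by rewrite -Hr mem_rot.
by rewrite -(nth_index z wc'); apply: key; rewrite index_mem.
Qed.

Section NH.
Variable n : nat.
Hypothesis n_gt0 : 0 < n.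
Local Notation VV := (V n).
Local Notation EE := (@eV n).

Definition cls (x : VV) : nat :=
  match x with
  | inl _ => 0 | inr (inl _) => 0 | inr (inr (inl _)) => 1 | inr (inr (inr (inl _))) => 1
  | inr (inr (inr (inr (inl _)))) => 2 | inr (inr (inr (inr (inr (inl _))))) => 3
  | _ => 4 end.

Lemma edge_cls x y : EE x y ->
  [|| cls x == 0, cls y == 0 | (cls x == cls y) && ((cls x == 2) || (cls x == 3))].
Proof. by case: x => [i|[i|[i|[i|[i|[i|[]]]]]]]; case: y => [j|[j|[j|[j|[j|[j|[]]]]]]]. Qed.

Lemma card_cls0 : #|[set x : VV | cls x == 0]| = 4 * n.
Proof.
rewrite card_V /A1 /A2 /B1 /B2 /T1 /T2 /vv /= ?card_false ?card_true ?card_ord /na; lia.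
Qed.

Lemma card_cls1 : #|[set x : VV | cls x == 1]| = 4 * n - 2.
Proof.
rewrite card_V /A1 /A2 /B1 /B2 /T1 /T2 /vv /= ?card_false ?card_true ?card_ord /nb; lia.
Qed.

Lemma eV_nonham : ~ hamiltonian EE.
Proof.
move=> [c [Uc Hall Hcyc]].
pose N := next c.
have Ne x : eV x (N x) := next_cycle Hcyc (Hall x).
have Ninj : injective N := can_inj (prev_next Uc).
have entry : forall k, k != 0 -> (exists z, cls z == k) -> exists x, (cls x == 0) && (cls (N x) == k).
  move=> k k0 [z Pz].
  case: (boolP [exists x, (cls x != k) && (cls (N x) == k)]) => [/existsP[x /andP[H1 H2]]|/existsPn H].
    exists x; rewrite H2 andbT; have := edge_cls (Ne x); rewrite (eqP H2) (negbTE k0) /=.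
    by rewrite eq_sym (negbTE H1) andFb orbF.
  have a0 : 0 < na n by rewrite /na; lia.
  have HQ : forall x, cls x != k -> cls (N x) != k.
    by move=> x Hx; have := H x; rewrite Hx.
  have Q0 : cls (@A1 n (Ordinal a0)) != k by rewrite /= eq_sym.
  by have := next_closed (Q := fun x => cls x != k) Uc HQ (Hall _) Q0 (Hall z); rewrite /= Pz.
have [x1 /andP[x1A x1T]] := entry 2 isT (ex_intro _ (@T1 n ord0) isT).
have [x2 /andP[x2A x2T]] := entry 3 isT (ex_intro _ (@T2 n ord0) isT).
have [x3 /andP[x3A x3T]] := entry 4 isT (ex_intro _ (@vv n) isT).
pose X := [set x | (cls x == 0) && (cls (N x) == 1)].
have cX : #|X| = 4 * n - 2.
  rewrite -card_cls1 -(card_imset X Ninj); apply: eq_card => y; rewrite [in RHS]inE.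
  apply/imsetP/idP => [[x] | Hy].
    by rewrite inE => /andP[_ H] ->.
  exists (prev c y); last by rewrite /N next_prev.
  rewrite inE /N next_prev // Hy andbT.
  have := edge_cls (prev_cycle Hcyc (Hall y)); rewrite (eqP Hy) /=.
  by case: (cls (prev c y)) => [|[|k]].
pose Y := [set x | (cls x == 0) && ~~ ((cls x == 0) && (cls (N x) == 1))].
have cY : #|Y| = 2.
  rewrite card_subD; last by move=> x /andP[].
  by rewrite card_cls0 cX; lia.
have sub : (x1 |: (x2 |: [set x3])) \subset Y.
  apply/subsetP => x; rewrite !inE => /orP[|/orP[]] /eqP ->; rewrite ?x1A ?x2A ?x3A ?(eqP x1T) ?(eqP x2T) ?(eqP x3T) //.
have d12 : x1 != x2 by apply/eqP => E; move: x1T; rewrite E (eqP x2T).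
have d13 : x1 != x3 by apply/eqP => E; move: x1T; rewrite E (eqP x3T).
have d23 : x2 != x3 by apply/eqP => E; move: x2T; rewrite E (eqP x3T).
have := subset_leq_card sub; rewrite cY !cardsU1 cards1 !inE negb_or d12 d13 d23.
done.
Qed.
End NH.

Section Conn.
Variable n : nat.
Hypothesis n_gt0 : 0 < n.
Local Notation VV := (V n).
Local Notation EE := (@eV n).
Variable S : {set VV}.
Hypothesis HS : #|S| < n.
Local Notation D := (delete_rel EE S).

Lemma Dedge x y : EE x y -> x \notin S -> y \notin S -> D x y.
Proof. by rewrite /delete_rel /= => -> -> ->. Qed.

Lemma ph1 (K : finType) (f : K -> VV) : injective f -> n <= #|K| -> exists k, f k \notin S.
Proof.
move=> fi nK; case: (boolP [exists k, f k \notin S]) => [/existsP[k Hk]|/existsPn H]; first by exists k.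
have : f @: [set: K] \subset S by apply/subsetP => y /imsetP[k _ ->]; have := H k; rewrite negbK.
move/subset_leq_card; rewrite card_imset // cardsT => H2; have := leq_ltn_trans (leq_trans nK H2) HS; by rewrite ltnn.
Qed.

Lemma ph2 (K : finType) (f g : K -> VV) : injective f -> injective g ->
  (forall k l, f k != g l) -> n <= #|K| -> exists k, (f k \notin S) && (g k \notin S).
Proof.
move=> fi gi fg nK.
case: (boolP [exists k, (f k \notin S) && (g k \notin S)]) => [/existsP[k Hk]|/existsPn H]; first by exists k.
pose h k := if f k \in S then f k else g k.
have hi : injective h.
  move=> k1 k2; rewrite /h; case: ifP => H1; case: ifP => H2 E.
  - exact: fi.
  - by move: (fg k1 k2); rewrite E eqxx.
  - by move: (fg k2 k1); rewrite E eqxx.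
  - exact: gi.
have : h @: [set: K] \subset S.
  apply/subsetP => y /imsetP[k _ ->]; rewrite /h; case: ifP => // H1.
  by have := H k; rewrite negb_and !negbK H1 /=.
move/subset_leq_card; rewrite card_imset // cardsT => H2; have := leq_ltn_trans (leq_trans nK H2) HS; by rewrite ltnn.
Qed.

Definition step (x d : nat) := if x + d < nm n then x + d else x + d - nm n.
Definition zz (x : 'I_(nm n)) (d : nat) : 'I_(nm n) := insubd ord0 (step x d).

Lemma zzE (x : 'I_(nm n)) d : d < nm n -> nat_of_ord (zz x d) = step x d.
Proof.
move=> dm; rewrite /zz val_insubd ifT //; rewrite /step; have := ltn_ord x.
by case: ifP => H1; lia.
Qed.

Lemma Tconn (f : 'I_(nm n) -> VV) : injective f -> (forall x y : 'I_(nm n), tT n x y -> EE (f x) (f y)) ->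
  forall d (x y : 'I_(nm n)), dist n x y <= d -> f x \notin S -> f y \notin S -> connect D (f x) (f y).
Proof.
move=> fi Hf d; have Hnm := nmE n.
elim: d => [|d IH] x y Hd Sx Sy.
  have -> : x = y.
    apply: ord_inj; move: Hd (ltn_ord x) (ltn_ord y); rewrite /dist /distM.
    by case: (leqP x y) => H; lia.
  exact: connect0.
case: (eqVneq x y) => [->|xy]; first exact: connect0.
have xy' : nat_of_ord x != nat_of_ord y by [].
case: (leqP (dist n x y) n) => Hdn.
  apply: connect1; apply: Dedge => //; apply: Hf; rewrite /tT.
  move: Hdn xy' (ltn_ord x) (ltn_ord y); rewrite /dist /distM; case: (leqP x y) => H; lia.
have [k Hk] : exists k : 'I_n, f (zz x k.+1) \notin S.
  apply: (ph1 (f := fun k : 'I_n => f (zz x k.+1))); last by rewrite card_ord.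
  move=> k1 k2 /fi /(congr1 val) /=; rewrite !zzE; try (have := ltn_ord k1; have := ltn_ord k2; lia).
  move=> E; apply: ord_inj; move: E (ltn_ord k1) (ltn_ord k2) (ltn_ord x); rewrite /step.
  by case: ifP => H1; case: ifP => H2; lia.
have kn : k.+1 < nm n by have := ltn_ord k; lia.
apply: (connect_trans (y := f (zz x k.+1))).
  apply: connect1; apply: Dedge => //; apply: Hf; rewrite /tT /dist /distM zzE //.
  move: (ltn_ord k) (ltn_ord x); rewrite /step; case: (ltnP (x + k.+1) (nm n)) => H1 /=; case: ifP => H2; lia.
apply: IH => //.
move: Hd Hdn (ltn_ord k) (ltn_ord x) (ltn_ord y); rewrite /dist /distM zzE // /step.
case: (ltnP (x + k.+1) (nm n)) => H1 /=; case: (leqP x y) => H2 /=; case: ifP => H3; lia.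
Qed.


Lemma a0pf : 0 < na n. Proof. rewrite /na; lia. Qed.
Definition a0o : 'I_(na n) := Ordinal a0pf.
Definition ordT (v : nat) : 'I_(nm n) := inord v.
Definition ordA (v : nat) : 'I_(na n) := insubd a0o v.
Lemma ordTE v : v < nm n -> nat_of_ord (ordT v) = v.
Proof. by move=> H; rewrite /ordT inordK. Qed.
Lemma ordAE v : v < na n -> nat_of_ord (ordA v) = v.
Proof. by move=> H; rewrite /ordA val_insubd H. Qed.

Ltac hop z := apply: (@connect_trans _ _ z); first (apply: connect1; apply: Dedge => //).

Lemma conn_all x y : x \notin S -> y \notin S -> connect D x y.
Proof.
have Hnm := nmE n. have Hna : na n = 2 * n by []. have Hnb : nb n = (2 * n).-1 by [].
have [i1 S1] : exists i, @A1 n i \notin S.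
  by apply: ph1; [move=> i j [] | rewrite card_ord Hna; lia].
have [j1 S2] : exists i, @B1 n i \notin S.
  by apply: ph1; [move=> i j [] | rewrite card_ord Hnb; lia].
have [i2 S3] : exists i, @A2 n i \notin S.
  by apply: ph1; [move=> i j [] | rewrite card_ord Hna; lia].
have [j2 S4] : exists i, @B2 n i \notin S.
  by apply: ph1; [move=> i j [] | rewrite card_ord Hnb; lia].
pose a1 := A1 i1.
have ordT_inj : forall v w, v < nm n -> w < nm n -> ordT v = ordT w -> v = w.
  by move=> v w Hv Hw /(congr1 (@nat_of_ord _)); rewrite !ordTE.
have ordA_inj : forall v w, v < na n -> w < na n -> ordA v = ordA w -> v = w.
  by move=> v w Hv Hw /(congr1 (@nat_of_ord _)); rewrite !ordAE.
have TT1 : forall u v : 'I_(nm n), T1 u \notin S -> T1 v \notin S -> connect D (T1 u) (T1 v).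
  move=> u v Su Sv; apply: (Tconn (f := @T1 n)) Su Sv => //; first by move=> p q [].
have TT2 : forall u v : 'I_(nm n), T2 u \notin S -> T2 v \notin S -> connect D (T2 u) (T2 v).
  move=> u v Su Sv; apply: (Tconn (f := @T2 n)) Su Sv => //; first by move=> p q [].
have to_a1 : forall z, z \notin S -> connect D z a1.
  case=> [i|[i|[i|[i|[i|[i|[]]]]]]] Sz.
  - hop (B1 j1); hop (A2 i2); hop (B2 j2); hop a1; exact: connect0.
  - hop (B2 j2); hop a1; exact: connect0.
  - hop (A2 i2); hop (B2 j2); hop a1; exact: connect0.
  - hop a1; exact: connect0.
  - have [k /andP[Sk1 Sk2]] : exists k : 'I_n, (T1 (ordT k) \notin S) && (A1 (ordA k) \notin S).
      apply: ph2; last by rewrite card_ord.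
      + move=> k l [] /ordT_inj H; apply: ord_inj; apply: H; have := ltn_ord k; have := ltn_ord l; lia.
      + move=> k l [] /ordA_inj H; apply: ord_inj; apply: H; have := ltn_ord k; have := ltn_ord l; lia.
      + by [].
    apply: (connect_trans (TT1 i (ordT k) Sz Sk1)).
    hop (A1 (ordA k)); first by have Hk := ltn_ord k; rewrite /= ordTE ?ordAE; lia.
    hop (B1 j1); hop (A2 i2); hop (B2 j2); hop a1; exact: connect0.
  - have [k /andP[Sk1 Sk2]] : exists k : 'I_n, (T2 (ordT k) \notin S) && (A1 (ordA (n + k)) \notin S).
      apply: ph2; last by rewrite card_ord.
      + move=> k l [] /ordT_inj H; apply: ord_inj; apply: H; have := ltn_ord k; have := ltn_ord l; lia.
      + move=> k l [] /ordA_inj H; apply: ord_inj; have := ltn_ord k; have := ltn_ord l; have := H; lia.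
      + by [].
    apply: (connect_trans (TT2 i (ordT k) Sz Sk1)).
    hop (A1 (ordA (n + k))); first by have Hk := ltn_ord k; rewrite /= ordTE ?ordAE; lia.
    hop (B1 j1); hop (A2 i2); hop (B2 j2); hop a1; exact: connect0.
  - hop (A2 i2); hop (B2 j2); hop a1; exact: connect0.
have from_a1 : forall z, z \notin S -> connect D a1 z.
  case=> [i|[i|[i|[i|[i|[i|[]]]]]]] Sz.
  - hop (B1 j1); hop (A2 i2); hop (B2 j2); hop (A1 i); exact: connect0.
  - hop (B1 j1); hop (A2 i); exact: connect0.
  - hop (B1 i); exact: connect0.
  - hop (B1 j1); hop (A2 i2); hop (B2 i); exact: connect0.
  - have [k /andP[Sk1 Sk2]] : exists k : 'I_n, (A2 (ordA k) \notin S) && (T1 (ordT (2 * n + k)) \notin S).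
      apply: ph2; last by rewrite card_ord.
      + move=> k l [] /ordA_inj H; apply: ord_inj; apply: H; have := ltn_ord k; have := ltn_ord l; lia.
      + move=> k l [] /ordT_inj H; apply: ord_inj; have := ltn_ord k; have := ltn_ord l; have := H; lia.
      + by [].
    hop (B1 j1); hop (A2 (ordA k)); hop (T1 (ordT (2 * n + k))); first by have Hk := ltn_ord k; rewrite /= ordTE ?ordAE; lia.
    exact: TT1.
  - have [k /andP[Sk1 Sk2]] : exists k : 'I_n, (A2 (ordA (n + k)) \notin S) && (T2 (ordT (2 * n + k)) \notin S).
      apply: ph2; last by rewrite card_ord.
      + move=> k l [] /ordA_inj H; apply: ord_inj; have := ltn_ord k; have := ltn_ord l; have := H; lia.
      + move=> k l [] /ordT_inj H; apply: ord_inj; have := ltn_ord k; have := ltn_ord l; have := H; lia.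
      + by [].
    hop (B1 j1); hop (A2 (ordA (n + k))); hop (T2 (ordT (2 * n + k))); first by have Hk := ltn_ord k; rewrite /= ordTE ?ordAE; lia.
    exact: TT2.
  - hop (vv n); exact: connect0.
move=> Sx Sy; exact: connect_trans (to_a1 _ Sx) (from_a1 _ Sy).
Qed.
End Conn.

Section Transfer.
Variables (U W : finType) (eU : rel U) (f : U -> W) (g : W -> U).
Hypotheses (fK : cancel f g) (gK : cancel g f).
Definition eW : rel W := fun i j => eU (g i) (g j).

Lemma tr_oriented : oriented eU -> oriented eW.
Proof. by case=> H1 H2; split => [x|x y]; [exact: H1 | exact: H2]. Qed.

Lemma tr_card (P : pred U) : #|[set j | P (g j)]| = #|[set y | P y]|.
Proof.
rewrite -(card_imset _ (can_inj fK)); apply: eq_card => j; rewrite inE.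
apply/idP/imsetP => [H|[y]]; first by exists (g j); rewrite ?inE ?gK.
by rewrite inE => Hy ->; rewrite fK.
Qed.

Lemma tr_regular d : regular eU d -> regular eW d.
Proof.
move=> H i; have [H1 H2] := H (g i); split.
  by rewrite /outdeg -H1 /eW (tr_card (fun y => eU (g i) y)).
by rewrite /indeg -H2 /eW (tr_card (fun y => eU y (g i))).
Qed.

Lemma tr_connect (S : {set W}) a b : connect (delete_rel eU (g @: S)) a b ->
  connect (delete_rel eW S) (f a) (f b).
Proof.
move/connectP => [p Hp ->]; apply/connectP; exists (map f p); last by rewrite last_map.
elim: p a Hp => [//|x p IH] a /= /andP[/and3P[Hax Ha Hx] Hp]; rewrite IH // andbT.
rewrite /delete_rel /eW /= !fK Hax /=.
apply/andP; split; apply/negP => Hin; [move/negP: Ha | move/negP: Hx]; apply; rewrite -[X in X \in _]fK; exact: imset_f.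
Qed.

Lemma tr_strong k : k < #|W| -> (forall S : {set U}, #|S| < k -> strongly_connected_minus eU S) ->
  strongly_k_connected eW k.
Proof.
move=> kW H; split => // S HS x y Sx Sy.
have HS' : #|g @: S| < k by rewrite (card_imset _ (can_inj gK)).
have := H _ HS' (g x) (g y).
rewrite !mem_imset; try exact: (can_inj gK).
by move=> /(_ Sx Sy) /tr_connect; rewrite !gK.
Qed.

Lemma tr_ham : ~ hamiltonian eU -> ~ hamiltonian eW.
Proof.
move=> NH [c [Uc Hall Hc]]; apply: NH; exists (map g c); split.
- by rewrite (map_inj_uniq (can_inj gK)).
- by move=> x; rewrite -[x]fK map_f.
- by rewrite cycle_map.
Qed.
End Transfer.

Lemma card_VV n : 0 < n -> #|{: V n}| = 16 * n + 1.
Proof. by move=> n0; rewrite !card_sum card_unit !card_ord /na /nb /nm; lia. Qed.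

Theorem proposition7p2 (n : nat) :
  exists e : rel 'I_(16 * n + 1),
    [/\ oriented e, regular e (2 * n), strongly_k_connected e n
      & ~ hamiltonian e].
Proof.
case: (posnP n) => [->|n0].
  exists (fun _ _ => false); split.
  - by split.
  - by move=> x; rewrite /outdeg /indeg !card_false.
  - split; first by rewrite card_ord.
    by move=> S; rewrite ltn0.
  - move=> [c [_ Hall Hc]]; move: (Hall ord0) Hc; clear Hall.
    by case: c => [|x [|y q]].
have HV := card_VV n0.
pose f (x : V n) : 'I_(16 * n + 1) := cast_ord HV (enum_rank x).
pose g (i : 'I_(16 * n + 1)) : V n := enum_val (cast_ord (esym HV) i).
have fK : cancel f g by move=> x; rewrite /f /g cast_ordK enum_rankK.
have gK : cancel g f by move=> i; rewrite /f /g enum_valK cast_ordKV.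
exists (eW (@eV n) g); split.
- apply: tr_oriented; split; [exact: eV_irr | exact: eV_asym].
- exact/tr_regular/eV_reg.
- apply: (tr_strong fK gK); first by rewrite card_ord; lia.
  by move=> S HS x y; exact: conn_all.
- exact/tr_ham/eV_nonham.
Qed.
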